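(* Suppose that $(A_1,B_1)$ and $(A_2,B_2)$ are pairs of Gram mates. Then $A_1\otimes A_2$ and $B_1\otimes B_2$ are Gram mates, where $\otimes$ denotes the Kronecker product.
   Context: Two $(0,1)$ matrices $A,B$ are Gram mates if $AA^T=BB^T$, $A^TA=B^TB$ and $A\neq B$. *)

(* Defs.v *)
From mathcomp Require Import all_boot all_algebra.
From mathcomp Require Export mxtens.
Set Implicit Arguments. Unset Strict Implicit. Unset Printing Implicit Defensive.
Import GRing.Theory.
Local Open Scope ring_scope.

Definition zero_one_mx (m n : nat) (A : 'M[int]_(m, n)) : Prop :=
  forall i j, A i j = 0 \/ A i j = 1.

Definition gram_mates (m n : nat) (A B : 'M[int]_(m, n)) : Prop :=
  [/\ zero_one_mx A, zero_one_mx B,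
      A *m A^T = B *m B^T, A^T *m A = B^T *m B & A <> B].

(* Main.v *)
Require Import Defs.
From mathcomp Require Import all_boot all_algebra.
From mathcomp Require Import mxtens.
Local Open Scope ring_scope.
Import GRing.Theory Num.Theory.

Lemma zo_tens m1 n1 m2 n2 (A : 'M[int]_(m1, n1)) (B : 'M[int]_(m2, n2)) :
  zero_one_mx A -> zero_one_mx B -> zero_one_mx (tensmx A B).
Proof.
move=> hA hB i j.
case: (mxtens_indexP i) => i1 i2; case: (mxtens_indexP j) => j1 j2.
rewrite tensmxE.
by case: (hA i1 j1) => ->; case: (hB i2 j2) => ->; rewrite ?mulr0 ?mul0r ?mulr1; auto.
Qed.

Lemma gm_nz m n (A B : 'M[int]_(m, n)) : gram_mates A B ->
  exists i j, A i j = 1.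
Proof.
case=> hA hB hAA _ hne.
case: (boolP [exists i, exists j, A i j == 1]).
  by move=> /existsP [i /existsP [j /eqP h]]; exists i, j.
rewrite negb_exists => /forallP hn.
have A0 : A = 0.
  apply/matrixP => i j; rewrite mxE.
  move: (hn i); rewrite negb_exists => /forallP /(_ j).
  by case: (hA i j) => ->.
exfalso; apply: hne.
rewrite A0; apply/esym/matrixP => i j; rewrite mxE.
case: (hB i j) => // hb.
have : (B *m B^T) i i = 0 by rewrite -hAA A0 mul0mx mxE.
rewrite mxE (bigD1 j) //= !mxE hb mulr1.
move=> /eqP; rewrite paddr_eq0 ?oner_eq0 //.
apply: sumr_ge0 => k _; rewrite !mxE.
by case: (hB i k) => ->.
Qed.

Arguments gm_nz {m n A B}.

Theorem proposition5p3 (m1 n1 m2 n2 : nat)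
  (A1 B1 : 'M[int]_(m1, n1)) (A2 B2 : 'M[int]_(m2, n2)) :
  gram_mates A1 B1 -> gram_mates A2 B2 ->
  gram_mates (tensmx A1 A2) (tensmx B1 B2).
Proof.
move=> g1 g2.
have [k [l hkl]] := gm_nz g2.
case: g1 => a1 b1 c1 d1 e1; case: g2 => a2 b2 c2 d2 e2.
split; try by apply: zo_tens.
- by rewrite !trmx_tens !tensmx_mul c1 c2.
- by rewrite !trmx_tens !tensmx_mul d1 d2.
move=> heq.
have hij : forall i j, A1 i j = B1 i j * B2 k l.
  move=> i j.
  have := congr1 (fun M : 'M[int]_(m1 * m2, n1 * n2) => M (mxtens_index (i, k)) (mxtens_index (j, l))) heq.
  by rewrite /= !tensmxE hkl mulr1.
case: (b2 k l) => hb.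
- have [i [j h]] := gm_nz (And5 a1 b1 c1 d1 e1).
  by move: (hij i j); rewrite h hb mulr0.
- apply: e1; apply/matrixP => i j; by rewrite hij hb mulr1.
Qed.
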